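(* Let $B$ be a C*-algebra and $A\subseteq B$ a closed *-subalgebra satisfying the ideal intersection property relative to $B$. Let $J$ be a closed two-sided ideal of $B$. Then $$\mathrm{Ann}_B(\langle J\cap A\rangle_B)=\mathrm{Ann}_B(J).$$
   Context: $\langle S\rangle_B=[BSB]$ denotes the closed two-sided ideal of $B$ generated by $S\subseteq B$, where $[\cdot]$ is closed linear span. For a closed two-sided ideal $K$ of $B$, $\mathrm{Ann}_B(K)=\{x\in B: xk=0\ \forall k\in K\}$ (which equals $\{x\in B: kx=0\ \forall k\in K\}$). $A$ satisfies the ideal intersection property relative to $B$ if $J\cap A\neq\{0\}$ for every nonzero closed two-sided ideal $J$ of $B$. *)

(* Defs.v *)
From mathcomp Require Import all_boot all_algebra.
From mathcomp Require Import all_classical all_reals all_analysis.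
From mathcomp Require Import complex.
Set Implicit Arguments. Unset Strict Implicit. Unset Printing Implicit Defensive.
Import GRing.Theory Num.Theory.
Local Open Scope ring_scope.
Local Open Scope classical_set_scope.

Record is_Cstar_algebra (R : realType) (V : completeNormedModType R[i])
    (mul : V -> V -> V) (star : V -> V) : Prop := {
  cs_mulA : forall x y z, mul x (mul y z) = mul (mul x y) z;
  cs_mulDl : forall x y z, mul (x + y) z = mul x z + mul y z;
  cs_mulDr : forall x y z, mul x (y + z) = mul x y + mul x z;
  cs_mulZl : forall (a : R[i]) x y, mul (a *: x) y = a *: mul x y;
  cs_mulZr : forall (a : R[i]) x y, mul x (a *: y) = a *: mul x y;
  cs_starK : forall x, star (star x) = x;
  cs_starD : forall x y, star (x + y) = star x + star y;
  cs_starZ : forall (a : R[i]) x, star (a *: x) = (Num.conj a) *: star x;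
  cs_starM : forall x y, star (mul x y) = mul (star y) (star x);
  cs_norm_mul : forall x y, `|mul x y| <= `|x| * `|y|;
  cs_Cstar : forall x, `|mul (star x) x| = `|x| ^+ 2
}.

Section Defs.
Context {R : realType} {V : completeNormedModType R[i]}.
Variable mul : V -> V -> V.
Variable star : V -> V.

Definition is_subspace (W : set V) : Prop :=
  W 0 /\ forall (a : R[i]) x y, W x -> W y -> W (a *: x + y).

Definition is_closed_subspace (W : set V) : Prop := is_subspace W /\ closed W.

Definition clspan (S : set V) : set V :=
  [set x | forall W, is_closed_subspace W -> S `<=` W -> W x].

Definition is_closed_ideal (K : set V) : Prop :=
  is_closed_subspace K /\
  (forall b k, K k -> K (mul b k)) /\ (forall b k, K k -> K (mul k b)).

Definition is_closed_star_subalgebra (A : set V) : Prop :=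
  is_closed_subspace A /\
  (forall x y, A x -> A y -> A (mul x y)) /\ (forall x, A x -> A (star x)).

Definition gen_ideal (S : set V) : set V :=
  clspan [set x | exists b s c, S s /\ x = mul (mul b s) c].

Definition Ann (K : set V) : set V :=
  [set x | forall k, K k -> mul x k = 0].

Definition ideal_intersection_property (A : set V) : Prop :=
  forall J, is_closed_ideal J -> J <> [set 0] -> J `&` A <> [set 0].

End Defs.

(* Main.v *)
Require Import Defs.
From mathcomp Require Import all_boot all_algebra.
From mathcomp Require Import all_classical all_reals all_analysis.
From mathcomp Require Import complex.
Import order.Order.TTheory GRing.Theory Num.Theory.
Local Open Scope classical_set_scope.
Local Open Scope ring_scope.

Lemma lip_cont (R : realType) (V : completeNormedModType R[i]) (f : V -> V) (C : R[i]) :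
  0 <= C -> (forall x y, `|f x - f y| <= C * `|x - y|) -> continuous f.
Proof.
move=> C0 Hf x; apply/cvgrPdist_lt => e e0.
have d0 : 0 < e / (C + 1) by rewrite divr_gt0 // ltr_wpDl.
have := @cvgr_dist_lt _ _ _ (nbhs x) _ id x cvg_id _ d0.
move=> H; near=> y; have Hy : `|x - y| < e / (C+1) by near: y; exact: H.
apply: (le_lt_trans (Hf x y)).
have : (C + 1) * `|x - y| < e.
  by rewrite -ltr_pdivlMl ?ltr_wpDl // mulrC.
apply: le_lt_trans; apply: ler_wpM2r => //; rewrite lerDl //.
Unshelve. all: by end_near. Qed.

Section S.
Variables (R : realType) (V : completeNormedModType R[i]).
Variables (mul : V -> V -> V) (star : V -> V).
Hypothesis HB : is_Cstar_algebra mul star.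

Lemma dbl0 (m : V) : m = m + m -> m = 0.
Proof. by move/(congr1 (fun z => z - m)); rewrite subrr addrK. Qed.

Lemma mulx0 x : mul x 0 = 0.
Proof. by apply: dbl0; rewrite -(cs_mulDr HB) addr0. Qed.

Lemma mul0x x : mul 0 x = 0.
Proof. by apply: dbl0; rewrite -(cs_mulDl HB) addr0. Qed.

Lemma star0 : star 0 = 0.
Proof. by apply: dbl0; rewrite -(cs_starD HB) addr0. Qed.

Lemma mulNr x y : mul x (- y) = - mul x y.
Proof. by rewrite -scaleN1r (cs_mulZr HB) scaleN1r. Qed.

Lemma mulNl x y : mul (- x) y = - mul x y.
Proof. by rewrite -scaleN1r (cs_mulZl HB) scaleN1r. Qed.

Lemma mulBr x y z : mul x (y - z) = mul x y - mul x z.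
Proof. by rewrite (cs_mulDr HB) mulNr. Qed.

Lemma mulBl x y z : mul (x - y) z = mul x z - mul y z.
Proof. by rewrite (cs_mulDl HB) mulNl. Qed.

Lemma cont_l b : continuous (mul b).
Proof.
apply: (@lip_cont _ _ _ `|b|) => // x y.
by rewrite -mulBr (cs_norm_mul HB).
Qed.

Lemma cont_r k : continuous (mul^~ k).
Proof.
apply: (@lip_cont _ _ _ `|k|) => // x y.
by rewrite -mulBl mulrC (cs_norm_mul HB).
Qed.

Lemma closed0 : closed [set (0 : V)].
Proof. exact/accessible_closed_set1/hausdorff_accessible/norm_hausdorff. Qed.

Lemma clspan_left (T : set V) : (forall b t, T t -> T (mul b t)) ->
  forall b y, clspan T y -> clspan T (mul b y).
Proof.
move=> HT b y Hy W [[W0 WD] Wc] TW.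
have : (mul b @^-1` W) y.
  apply: Hy; last by move=> t Tt; apply: TW; apply: HT.
  split; last by apply: preimage_closed => // z _; apply: cont_l.
  split; first by rewrite /= mulx0.
  by move=> a u v /= Wu Wv; rewrite (cs_mulDr HB) (cs_mulZr HB); apply: WD.
by [].
Qed.

End S.

Theorem lemma3p2 (R : realType) (V : completeNormedModType R[i])
  (mul : V -> V -> V) (star : V -> V)
  (HB : is_Cstar_algebra mul star)
  (A : set V) (HA : is_closed_star_subalgebra mul star A)
  (HIIP : ideal_intersection_property mul A)
  (J : set V) (HJ : is_closed_ideal mul J) :
  Ann mul (gen_ideal mul (J `&` A)) = Ann mul J.
Proof.
have mul0x := @mul0x _ _ _ _ HB.
have mulx0 := @mulx0 _ _ _ _ HB.
have star0 := @star0 _ _ _ _ HB.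
set S := [set x | exists b s c, (J `&` A) s /\ x = mul (mul b s) c].
set I := gen_ideal mul (J `&` A).
have HS : forall b t, S t -> S (mul b t).
  move=> b t [b' [s [c [Hs ->]]]]; exists (mul b b'), s, c; split => //.
  by rewrite !(cs_mulA HB).
have Ileft : forall b y, I y -> I (mul b y) := @clspan_left R V mul star HB _ HS.
have SI : forall t, S t -> I t by move=> t St W _; apply.
case: HJ => [[[J0 JD] Jc] [JL JR]].
have IJ : forall y, I y -> J y.
  move=> y; apply; first by split.
  by move=> t [b [s [c [[Js _] ->]]]]; apply: JR; apply: JL.
set L := J `&` Ann mul I.
have AnnC : closed (Ann mul I).
  have -> : Ann mul I = \bigcap_(k in I) ((mul^~ k) @^-1` [set 0]).
    by apply/seteqP; split => x /= Hx k Ik; apply: Hx.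
  apply: (@closed_bigI _ _ I) => k _. apply: preimage_closed. 2: exact: closed0.
  by move=> z _; exact: (@cont_r _ _ _ _ HB k z).
have HL : is_closed_ideal mul L.
  split; first split; first split.
  - split => //= k _; exact: mul0x.
  - move=> a x y [Jx Ax] [Jy Ay]; split; first exact: JD.
    by move=> k Ik /=; rewrite (cs_mulDl HB) (cs_mulZl HB) Ax // Ay // scaler0 addr0.
  - exact: closedI.
  split.
  - move=> b x [Jx Ax]; split; first exact: JL.
    by move=> k Ik /=; rewrite -(cs_mulA HB) Ax // mulx0.
  - move=> b x [Jx Ax]; split; first exact: JR.
    by move=> k Ik /=; rewrite -(cs_mulA HB) Ax //; apply: Ileft.
have LA : L `&` A = [set 0].
  apply/seteqP; split => a; last first.
    move=> /= ->; split; first split.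
    - exact: J0.
    - by move=> k _; exact: mul0x.
    - by case: HA => [[[]]].
  move=> [[Ja Aa] Aa'].
  have h : mul a (mul (mul (star a) a) (star a)) = 0.
    by apply: Aa; apply: SI; exists (star a), a, (star a).
  set p := mul a (star a).
  have pp : mul p p = 0 by move: h; rewrite /p !(cs_mulA HB).
  have sp : star p = p by rewrite /p (cs_starM HB) (cs_starK HB).
  have p0 : p = 0.
    have := cs_Cstar HB p; rewrite sp pp normr0 => /esym /eqP.
    by rewrite expf_eq0 /= normr_eq0 => /eqP.
  have sa0 : star a = 0.
    have := cs_Cstar HB (star a); rewrite (cs_starK HB) -/p p0 normr0 => /esym /eqP.
    by rewrite expf_eq0 /= normr_eq0 => /eqP.
  by rewrite /= -(cs_starK HB a) sa0 star0.
have L0 : L = [set 0].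
  by apply: contrapT => /(HIIP _ HL).
apply/seteqP; split => x Hx k Hk.
- have : L (mul x k).
    split; first exact: JL.
    by move=> y Iy; rewrite -(cs_mulA HB) Hx //; apply: Ileft.
  by rewrite L0.
- by apply: Hx; apply: IJ.
Qed.
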